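(* Assume (A1)–(A3). Let $s\ge0$, $\alpha^*\in I$, $\alpha_s\in(\underline{\alpha},\alpha^* )$ and $u_s\in B_{\alpha_s}$. Let $t>\tau>s$ satisfy $\tau<s+T(\alpha_s,\alpha^* )$ and $t<\min\bigl\{\tau+T(\alpha(\tau,s,\alpha_s),\alpha^* ),\,s+T(\alpha_s,\alpha^* )\bigr\}$. Then $$U(s,t)u_s=U(\tau,t)U(s,\tau)u_s.$$
   Context: Standing assumptions (A1)–(A3): (A1) Fix $\underline{\alpha}>0$, $\overline{\alpha}\in(0,\infty]$ and set $I=(\underline{\alpha},\overline{\alpha})$. $(B_\alpha,\lVert\cdot\rVert_\alpha)_{\alpha\in I}$ is a family of Banach spaces such that for $\alpha'\le\alpha''$ in $I$: $B_{\alpha'}\subset B_{\alpha''}$ and $\lVert u\rVert_{\alpha'}\ge\lVert u\rVert_{\alpha''}$ for $u\in B_{\alpha'}$; moreover, if $u\in B_{\alpha'}$ and $u=0$ in $B_{\alpha''}$ then $u=0$ in $B_{\alpha'}$. Put $B_I:=\bigcup_{\alpha\in I}B_\alpha$. (A2) For each $\alpha\in I$ there are a closed linear subspace $C_\alpha\subset B_\alpha$ and a dense (in $C_\alpha$) linear subspace $D_\alpha\subset C_\alpha$. $A:B_I\to B_I$ is linear and, for each $\alpha\in I$, $(A,D_\alpha)$ is the generator of a $C_0$-semigroup $S_\alpha(t)$ on $(C_\alpha,\lVert\cdot\rVert_\alpha)$. For all $\alpha'<\alpha$ in $I$: $B_{\alpha'}\subset D_\alpha$, $B_{\alpha'}$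 is $S_\alpha(t)$-invariant, and $S_\alpha(t)\restriction_{B_{\alpha'}}=S_{\alpha'}(t)$. There are constants $\nu\ge1$, $\omega\in\mathbb{R}$, independent of $\alpha$, with $\lVert S_\alpha(t)\rVert\le\nu e^{\omega t}$ for all $t\ge0$, $\alpha\in I$. (A3) $M,N:I\to(0,\infty)$ are increasing continuous functions, and $Z:B_I\to B_I$ is linear such that for any $\alpha^*\in I$ and any $\alpha',\alpha''\in(\underline{\alpha},\alpha^*]$ with $\alpha'<\alpha''$, $Z$ maps $B_{\alpha'}$ boundedly into $B_{\alpha''}$ with $\lVert Zu\rVert_{\alpha''}\le\bigl(\frac{M(\alpha^* )}{\alpha''-\alpha'}+N(\alpha^* )\bigr)\lVert u\rVert_{\alpha'}$ for $u\in B_{\alpha'}$. Define $T(\alpha,\beta):=\dfrac{\beta-\alpha}{e\,\nu\,M(\beta)}$ for $\beta\ge\alpha>\underline{\alpha}$. For $\alpha\in I$, $B_{\alpha+}:=\bigcap_{\beta>\alpha,\,\beta\in I}B_\beta$. For $s\ge0$, $\alpha^*\in I$, $\alpha_s\in(\underline{\alpha},\alpha^* )$, $u_s\in B_{\alpha_s+}$ and $t\in[s,s+T(\alpha_s,\alpha^* ))$, $U(s,t)u_s:=u(t)$, where $u$ is the unique solution on $[s,s+T(\alpha_s,\alpha^* ))$ in $B_{\alpha^*}$ of $u'=Au+Zu$, $u(s)=u_s$ (with $Au(t),Zu(t)\in B_{\alpha^*}$), and $\alpha(t,s,\alpha_s):=\inf\{\alpha\in[\alpha_s,\alpha^* )\mid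 u(t)\in B_\alpha\}$; one has $\alpha(t,s,\alpha_s)<\alpha^*$ and $U(s,t)u_s\in B_{\alpha(t,s,\alpha_s)+}$, so $U(\tau,t)$ is applied to the initial value $U(s,\tau)u_s\in B_{\alpha(\tau,s,\alpha_s)+}$ at time $\tau$. *)

(* Defs.v *)
From Stdlib Require Import Reals Lra.
Open Scope R_scope.

(** * Ambient real vector space.  The spaces B_alpha are modelled as nested
    linear subspaces of one ambient real vector space (so B_I is their union). *)
Record RVS := {
  vcar :> Type;
  vzero : vcar;
  vadd : vcar -> vcar -> vcar;
  vopp : vcar -> vcar;
  vscal : R -> vcar -> vcar;
  vaddA : forall x y z, vadd x (vadd y z) = vadd (vadd x y) z;
  vaddC : forall x y, vadd x y = vadd y x;
  vadd0 : forall x, vadd x vzero = x;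
  vaddN : forall x, vadd x (vopp x) = vzero;
  vscal1 : forall x, vscal 1 x = x;
  vscalA : forall a b x, vscal a (vscal b x) = vscal (a * b) x;
  vscalDl : forall a b x, vscal (a + b) x = vadd (vscal a x) (vscal b x);
  vscalDr : forall a x y, vscal a (vadd x y) = vadd (vscal a x) (vscal a y)
}.
Arguments vzero {_}. Arguments vadd {_}. Arguments vopp {_}. Arguments vscal {_}.

Definition vsub {X : RVS} (x y : X) : X := vadd x (vopp y).

Section Generic.
Variable X : RVS.

Definition subspace (P : X -> Prop) : Prop :=
  P vzero /\ (forall x y, P x -> P y -> P (vadd x y)) /\
  (forall a x, P x -> P (vscal a x)).

Definition norm_on (P : X -> Prop) (n : X -> R) : Prop :=
  forall x y a, P x -> P y ->
    0 <= n x /\ (n x = 0 -> x = vzero) /\ n (vscal a x) = Rabs a * n x /\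
    n (vadd x y) <= n x + n y.

Definition seq_conv (n : X -> R) (x : nat -> X) (y : X) : Prop :=
  forall eps, 0 < eps -> exists K : nat, forall k, (K <= k)%nat -> n (vsub (x k) y) < eps.

Definition seq_cauchy (n : X -> R) (x : nat -> X) : Prop :=
  forall eps, 0 < eps -> exists K : nat, forall k m, (K <= k)%nat -> (K <= m)%nat ->
    n (vsub (x k) (x m)) < eps.

Definition banach (P : X -> Prop) (n : X -> R) : Prop :=
  subspace P /\ norm_on P n /\
  (forall x, (forall k, P (x k)) -> seq_cauchy n x -> exists y, P y /\ seq_conv n x y).

Definition closed_subspace (P : X -> Prop) (n : X -> R) (Q : X -> Prop) : Prop :=
  subspace Q /\ (forall x, Q x -> P x) /\
  (forall x y, (forall k, Q (x k)) -> P y -> seq_conv n x y -> Q y).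

Definition dense_subspace (Q : X -> Prop) (n : X -> R) (Q' : X -> Prop) : Prop :=
  subspace Q' /\ (forall x, Q' x -> Q x) /\
  (forall x eps, Q x -> 0 < eps -> exists d, Q' d /\ n (vsub x d) < eps).

Definition lim_right0 (n : X -> R) (f : R -> X) (y : X) : Prop :=
  forall eps, 0 < eps -> exists delta, 0 < delta /\
    forall h, 0 < h < delta -> n (vsub (f h) y) < eps.

Definition C0_generator (C : X -> Prop) (n : X -> R) (A : X -> X) (D : X -> Prop)
  (S : R -> X -> X) : Prop :=
  (forall t, 0 <= t ->
     (forall x, C x -> C (S t x)) /\
     (forall x y a, C x -> C y -> S t (vadd x y) = vadd (S t x) (S t y) /\
                                   S t (vscal a x) = vscal a (S t x)) /\
     (exists K, forall x, C x -> n (S t x) <= K * n x)) /\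
  (forall x, C x -> S 0 x = x) /\
  (forall t r x, 0 <= t -> 0 <= r -> C x -> S (t + r) x = S t (S r x)) /\
  (forall x, C x -> lim_right0 n (fun h => S h x) x) /\
  (forall x, C x ->
     (D x <-> exists y, C y /\ lim_right0 n (fun h => vscal (/ h) (vsub (S h x) x)) y)) /\
  (forall x, D x -> lim_right0 n (fun h => vscal (/ h) (vsub (S h x) x)) (A x)).

End Generic.

Arguments subspace {X}. Arguments norm_on {X}. Arguments seq_conv {X}.
Arguments seq_cauchy {X}. Arguments banach {X}. Arguments closed_subspace {X}.
Arguments dense_subspace {X}. Arguments lim_right0 {X}. Arguments C0_generator {X}.

(** The parameter interval I = (al, ah); ah = None encodes ah = +infinity. *)
Definition inI (al : R) (ah : option R) (x : R) : Prop :=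
  al < x /\ match ah with Some b => x < b | None => True end.

Definition inBI {X : RVS} (al : R) (ah : option R) (B : R -> X -> Prop) (x : X) : Prop :=
  exists a, inI al ah a /\ B a x.

Definition linear_BI {X : RVS} al ah (B : R -> X -> Prop) (L : X -> X) : Prop :=
  (forall x, inBI al ah B x -> inBI al ah B (L x)) /\
  (forall x y a, inBI al ah B x -> inBI al ah B y ->
     L (vadd x y) = vadd (L x) (L y) /\ L (vscal a x) = vscal a (L x)).

Definition Assum_A1 {X : RVS} (al : R) (ah : option R) (B : R -> X -> Prop) (nrm : R -> X -> R)
  : Prop :=
  0 < al /\ (match ah with Some b => 0 < b | None => True end) /\
  (forall a, inI al ah a -> banach (B a) (nrm a)) /\
  (forall a1 a2 u, inI al ah a1 -> inI al ah a2 -> a1 <= a2 -> B a1 u ->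
     B a2 u /\ nrm a2 u <= nrm a1 u).
(* The condition "u in B_a1, u = 0 in B_a2 implies u = 0 in B_a1" is automatic
   in this model, since all B_a share the zero of the ambient space. *)

Definition Assum_A2 {X : RVS} (al : R) (ah : option R) (B : R -> X -> Prop) (nrm : R -> X -> R)
  (C D : R -> X -> Prop) (A : X -> X) (S : R -> R -> X -> X) (nu omega : R) : Prop :=
  (forall a, inI al ah a ->
     closed_subspace (B a) (nrm a) (C a) /\ dense_subspace (C a) (nrm a) (D a) /\
     C0_generator (C a) (nrm a) A (D a) (S a)) /\
  linear_BI al ah B A /\
  (forall a1 a, inI al ah a1 -> inI al ah a -> a1 < a ->
     (forall x, B a1 x -> D a x) /\
     (forall t x, 0 <= t -> B a1 x -> B a1 (S a t x)) /\
     (forall t x, 0 <= t -> B a1 x -> S a t x = S a1 t x)) /\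
  1 <= nu /\
  (forall a t x, inI al ah a -> 0 <= t -> C a x -> nrm a (S a t x) <= nu * exp (omega * t) * nrm a x).

Definition Assum_A3 {X : RVS} (al : R) (ah : option R) (B : R -> X -> Prop) (nrm : R -> X -> R)
  (Z : X -> X) (M N : R -> R) : Prop :=
  (forall a, inI al ah a -> 0 < M a /\ 0 < N a) /\
  (forall a b, inI al ah a -> inI al ah b -> a <= b -> M a <= M b /\ N a <= N b) /\
  (forall a eps, inI al ah a -> 0 < eps -> exists delta, 0 < delta /\
     forall b, inI al ah b -> Rabs (b - a) < delta ->
       Rabs (M b - M a) < eps /\ Rabs (N b - N a) < eps) /\
  linear_BI al ah B Z /\
  (forall astar a1 a2 u, inI al ah astar -> al < a1 -> a1 < a2 -> a2 <= astar -> B a1 u ->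
     B a2 (Z u) /\ nrm a2 (Z u) <= (M astar / (a2 - a1) + N astar) * nrm a1 u).

Definition Tlen (nu : R) (M : R -> R) (a b : R) : R := (b - a) / (exp 1 * nu * M b).

Definition is_solution {X : RVS} (B : R -> X -> Prop) (nrm : R -> X -> R) (A Z : X -> X)
  (astar s L : R) (u0 : X) (u : R -> X) : Prop :=
  u s = u0 /\
  forall t, s <= t < s + L ->
    B astar (u t) /\ B astar (A (u t)) /\ B astar (Z (u t)) /\
    (forall eps, 0 < eps -> exists delta, 0 < delta /\
       forall h, h <> 0 -> Rabs h < delta -> s <= t + h < s + L ->
         nrm astar (vsub (vscal (/ h) (vsub (u (t + h)) (u t))) (vadd (A (u t)) (Z (u t))))
           < eps).

Definition is_alpha_inf {X : RVS} (B : R -> X -> Prop) (x : X) (a_s astar a : R) : Prop :=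
  (forall b, a_s <= b < astar -> B b x -> a <= b) /\
  (forall c, (forall b, a_s <= b < astar -> B b x -> c <= b) -> c <= a).

(* Main.v *)
Require Import Defs.
From Stdlib Require Import Reals Lra Lia List.
Open Scope R_scope.

Section VAlg.
Variable X : RVS.

Lemma vadd0l (x : X) : vadd vzero x = x.
Proof. rewrite vaddC. apply vadd0. Qed.

Lemma vaddNl (x : X) : vadd (vopp x) x = vzero.
Proof. rewrite vaddC. apply vaddN. Qed.

Lemma vadd_cancel (a b c : X) : vadd a b = vadd a c -> b = c.
Proof.
  intros H.
  rewrite <- (vadd0l b), <- (vadd0l c), <- (vaddNl a), <- !vaddA, H. reflexivity.
Qed.

Lemma vscal0 (x : X) : vscal 0 x = vzero.
Proof.
  apply (vadd_cancel (vscal 0 x)). rewrite vadd0, <- vscalDl.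
  f_equal; ring.
Qed.

Lemma vopp_scal (x : X) : vopp x = vscal (-1) x.
Proof.
  apply (vadd_cancel x). rewrite vaddN. rewrite <- (vscal1 _ x) at 1.
  rewrite <- vscalDl. replace (1 + -1) with 0 by ring. now rewrite vscal0.
Qed.

Lemma vscal_zero (a : R) : vscal a (@vzero X) = vzero.
Proof.
  rewrite <- (vscal0 vzero), vscalA. now rewrite Rmult_0_r.
Qed.

Inductive vexp := VAt (n : nat) | VAdd (a b : vexp) | VSub (a b : vexp) | VOpp (a : vexp)
  | VScal (r : R) (a : vexp) | VZero.

Fixpoint veval (xs : list X) (e : vexp) : X :=
  match e with
  | VAt n => nth n xs vzero
  | VAdd a b => vadd (veval xs a) (veval xs b)
  | VSub a b => vsub (veval xs a) (veval xs b)
  | VOpp a => vopp (veval xs a)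
  | VScal r a => vscal r (veval xs a)
  | VZero => vzero
  end.

Fixpoint coef (e : vexp) (i : nat) : R :=
  match e with
  | VAt n => if Nat.eqb i n then 1 else 0
  | VAdd a b => coef a i + coef b i
  | VSub a b => coef a i - coef b i
  | VOpp a => - coef a i
  | VScal r a => r * coef a i
  | VZero => 0
  end.

Fixpoint lin (xs : list X) (f : nat -> R) : X :=
  match xs with
  | nil => vzero
  | x :: t => vadd (vscal (f O) x) (lin t (fun i => f (S i)))
  end.

Lemma lin_ext xs : forall f g, (forall i, (i < length xs)%nat -> f i = g i) -> lin xs f = lin xs g.
Proof.
  induction xs as [|x t IH]; intros f g H; simpl; auto.
  rewrite (H O) by (simpl; lia). f_equal. apply IH. intros i Hi. apply H. simpl; lia.
Qed.

Lemma lin_zero xs : lin xs (fun _ => 0) = vzero.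
Proof.
  induction xs as [|x t IH]; simpl; auto. rewrite IH, vscal0, vadd0. auto.
Qed.

Lemma swap4 (a b c d : X) : vadd (vadd a b) (vadd c d) = vadd (vadd a c) (vadd b d).
Proof.
  rewrite !vaddA. f_equal. rewrite <- !vaddA. f_equal. apply vaddC.
Qed.

Lemma lin_add xs : forall f g, lin xs (fun i => f i + g i) = vadd (lin xs f) (lin xs g).
Proof.
  induction xs as [|x t IH]; intros f g; simpl. now rewrite vadd0.
  rewrite IH, vscalDl. apply swap4.
Qed.

Lemma lin_scal xs : forall r f, lin xs (fun i => r * f i) = vscal r (lin xs f).
Proof.
  induction xs as [|x t IH]; intros r f; simpl. now rewrite vscal_zero.
  rewrite IH, vscalDr, vscalA. auto.
Qed.

Lemma lin_opp xs f : lin xs (fun i => - f i) = vopp (lin xs f).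
Proof.
  rewrite vopp_scal, <- lin_scal. apply lin_ext. intros; ring.
Qed.

Lemma lin_at xs : forall n, nth n xs vzero = lin xs (fun i => if Nat.eqb i n then 1 else 0).
Proof.
  induction xs as [|x t IH]; intros n; simpl. destruct n; auto.
  destruct n as [|n]; simpl.
  - rewrite vscal1. rewrite <- (vadd0 _ x) at 1. rewrite <- (lin_zero t).
    f_equal.
  - rewrite vscal0, vadd0l. apply IH.
Qed.

Lemma veval_lin xs e : veval xs e = lin xs (coef e).
Proof.
  induction e; simpl.
  - apply lin_at.
  - rewrite IHe1, IHe2, <- lin_add. auto.
  - unfold vsub. rewrite IHe1, IHe2, <- lin_opp, <- lin_add. apply lin_ext; intros; ring.
  - rewrite IHe, <- lin_opp. auto.
  - rewrite IHe, <- lin_scal. auto.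
  - symmetry; apply lin_zero.
Qed.

Lemma veval_eq xs e1 e2 : (forall i, (i < length xs)%nat -> coef e1 i = coef e2 i) ->
  veval xs e1 = veval xs e2.
Proof. intros H. rewrite !veval_lin. now apply lin_ext. Qed.

End VAlg.

Ltac vidx e xs :=
  lazymatch xs with
  | cons e _ => constr:(O)
  | cons _ ?t => let n := vidx e t in constr:(S n)
  end.

Ltac vreify xs e :=
  lazymatch e with
  | vadd ?a ?b => let a' := vreify xs a in let b' := vreify xs b in constr:(VAdd a' b')
  | vsub ?a ?b => let a' := vreify xs a in let b' := vreify xs b in constr:(VSub a' b')
  | vopp ?a => let a' := vreify xs a in constr:(VOpp a')
  | vscal ?r ?a => let a' := vreify xs a in constr:(VScal r a')
  | vzero => constr:(VZero)
  | _ => let n := vidx e xs in constr:(VAt n)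
  end.

Ltac vring xs :=
  lazymatch goal with
  | |- ?l = ?r =>
    let l' := vreify xs l in let r' := vreify xs r in
    change (veval _ xs l' = veval _ xs r');
    apply veval_eq; intros i Hi; simpl in Hi;
    repeat (first [lia | destruct i as [|i]; [cbn; first [ring | field; assumption | field] |]])
  end.



Section Norm.
Variable X : RVS.
Variable P : X -> Prop.
Variable n : X -> R.
Hypothesis HP : subspace P.
Hypothesis Hn : norm_on P n.

Lemma P0 : P vzero. Proof. apply HP. Qed.
Lemma Padd x y : P x -> P y -> P (vadd x y). Proof. apply HP. Qed.
Lemma Pscal a x : P x -> P (vscal a x). Proof. apply HP. Qed.
Lemma Popp x : P x -> P (vopp x). Proof. intros; rewrite vopp_scal; now apply Pscal. Qed.
Lemma Psub x y : P x -> P y -> P (vsub x y). Proof. intros; apply Padd; auto; now apply Popp. Qed.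

Set Default Proof Using "HP Hn".
Lemma n_ge0 x : P x -> 0 <= n x. Proof. intros H; apply (Hn x x 0 H H). Qed.
Lemma n_eq0 x : P x -> n x = 0 -> x = vzero. Proof. intros H; apply (Hn x x 0 H H). Qed.
Lemma n_scal a x : P x -> n (vscal a x) = Rabs a * n x. Proof. intros H; apply (Hn x x a H H). Qed.
Lemma n_tri x y : P x -> P y -> n (vadd x y) <= n x + n y. Proof. intros H H'; apply (Hn x y 0 H H'). Qed.
Lemma n_opp x : P x -> n (vopp x) = n x.
Proof. intros H. rewrite vopp_scal, n_scal by auto. rewrite Rabs_left by lra. ring. Qed.
Lemma n_zero : n vzero = 0.
Proof. rewrite <- (vscal0 _ vzero), n_scal by apply P0. rewrite Rabs_R0; ring. Qed.
Lemma n_sub_tri x y z : P x -> P y -> P z -> n (vsub x z) <= n (vsub x y) + n (vsub y z).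
Proof.
  intros. replace (vsub x z) with (vadd (vsub x y) (vsub y z)) by vring (x :: y :: z :: nil).
  apply n_tri; apply Psub; auto.
Qed.
Lemma n_sub_sym x y : P x -> P y -> n (vsub x y) = n (vsub y x).
Proof.
  intros. replace (vsub x y) with (vopp (vsub y x)) by vring (x :: y :: nil).
  apply n_opp, Psub; auto.
Qed.
Lemma n_sub_self x : n (vsub x x) = 0.
Proof. replace (vsub x x) with (@vzero X) by vring (x :: nil). apply n_zero. Qed.

Lemma mvt (F : R -> X) (phi : R -> R) (a b : R) :
  a <= b -> (forall s, a <= s <= b -> P (F s)) ->
  (forall s, a < s <= b -> forall eps, 0 < eps -> exists delta, 0 < delta /\
     forall h, 0 < h < delta -> a <= s - h ->
       n (vsub (F s) (F (s - h))) < eps /\ Rabs (phi s - phi (s - h)) < eps) ->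
  (forall s, a <= s < b -> forall eps, 0 < eps -> exists delta, 0 < delta /\
     forall h, 0 < h < delta -> s + h <= b ->
       n (vsub (F (s + h)) (F s)) <= phi (s + h) - phi s + eps * h) ->
  n (vsub (F b) (F a)) <= phi b - phi a.
Proof.
  intros Hab HF Hl Hr.
  set (G := fun y => n (vsub (F y) (F a)) - phi y + phi a).
  assert (Hmain : forall eps, 0 < eps -> G b <= eps * (b - a) + eps).
  { intros eps Heps.
    set (E := fun x => a <= x <= b /\ forall y, a <= y <= x -> G y <= eps * (y - a) + eps).
    assert (Ga : G a = 0) by (unfold G; rewrite n_sub_self; ring).
    assert (HEa : E a).
    { split. lra. intros y Hy. replace y with a by lra. rewrite Ga. lra. }
    assert (Hbd : bound E) by (exists b; intros x [Hx _]; lra).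
    destruct (completeness E Hbd (ex_intro _ a HEa)) as [c [Hc1 Hc2]].
    assert (Hac : a <= c) by (apply Hc1; auto).
    assert (Hcb : c <= b) by (apply Hc2; intros x [Hx _]; lra).
    assert (Cl1 : forall y, a <= y < c -> G y <= eps * (y - a) + eps).
    { intros y Hy. destruct (Classical_Prop.classic (exists x, E x /\ y <= x)) as [[x [[_ Hx] Hyx]]|Hno].
      - apply Hx; lra.
      - exfalso. assert (c <= y); [|lra]. apply Hc2. intros x Ex.
        destruct (Rle_lt_dec x y); auto. exfalso; apply Hno; exists x; split; auto; lra. }
    assert (Cl2 : G c <= eps * (c - a) + eps).
    { destruct (Req_dec c a) as [->|Hca]. rewrite Ga; lra.
      destruct (Rle_lt_dec (G c) (eps * (c - a) + eps)) as [|Hlt]; auto. exfalso.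
      set (eta := G c - (eps * (c - a) + eps)).
      destruct (Hl c (conj (ltac:(lra) : a < c) Hcb) (eta / 2) ltac:(unfold eta; lra)) as [d [Hd Hd']].
      set (h := Rmin (d / 2) ((c - a) / 2)).
      assert (Hh : 0 < h < d) by (split; [apply Rmin_pos; lra | apply Rle_lt_trans with (d/2); [apply Rmin_l | lra]]).
      assert (Hh2 : h <= (c - a) / 2) by apply Rmin_r.
      destruct (Hd' h Hh ltac:(lra)) as [Hn1 Hp1].
      assert (Gy := Cl1 (c - h) ltac:(lra)).
      assert (Ht : n (vsub (F c) (F a)) <= n (vsub (F c) (F (c - h))) + n (vsub (F (c - h)) (F a)))
        by (apply n_sub_tri; apply HF; lra).
      unfold G in Gy, eta; unfold G at 1 in Hlt.
      apply Rabs_def2 in Hp1. assert (0 <= eps * h) by nra. unfold eta in *. destruct Hp1. clearbody h eta. clear Hd' Hl Hr. lra. }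
    assert (Cl3 : c = b).
    { destruct (Rle_lt_or_eq_dec c b Hcb) as [Hcb'|]; auto. exfalso.
      destruct (Hr c (conj Hac Hcb') eps Heps) as [d [Hd Hd']].
      set (h := Rmin (d / 2) (b - c)).
      assert (Hh : 0 < h < d) by (split; [apply Rmin_pos; lra | apply Rle_lt_trans with (d/2); [apply Rmin_l | lra]]).
      assert (Hh2 : h <= b - c) by apply Rmin_r.
      assert (E (c + h)).
      { split. lra. intros y Hy.
        destruct (Rlt_le_dec y c). apply Cl1; lra.
        destruct (Req_dec y c) as [->|]. auto.
        assert (Hy' := Hd' (y - c) ltac:(lra) ltac:(lra)).
        replace (c + (y - c)) with y in Hy' by ring.
        assert (Ht : n (vsub (F y) (F a)) <= n (vsub (F y) (F c)) + n (vsub (F c) (F a)))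
          by (apply n_sub_tri; apply HF; lra).
        unfold G in *. nra. }
      assert (c + h <= c) by (apply Hc1; auto). lra. }
    subst c. auto. }
  destruct (Rle_lt_dec (G b) 0) as [H|H].
  - unfold G in H; lra.
  - exfalso. set (eps := G b / (b - a + 2)).
    assert (0 < eps) by (unfold eps; apply Rdiv_lt_0_compat; lra).
    assert (Hm := Hmain eps H0).
    assert (eps * (b - a) + eps < G b).
    { unfold eps. apply Rmult_lt_reg_r with (b - a + 2). lra.
      field_simplify. nra. lra. }
    lra.
Qed.

End Norm.
Unset Default Proof Using.

Lemma pow_diff_le m x y : 0 <= y <= x -> x ^ S m - y ^ S m <= INR (S m) * x ^ m * (x - y).
Proof.
  induction m as [|m IH]; intros Hxy.
  - simpl; lra.
  - cbn [pow]. assert (H := IH Hxy). cbn [pow] in H.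
    assert (Hym : y * (y * y ^ m) <= x * (x * x ^ m)).
    { change (y * (y * y ^ m)) with (y ^ S (S m)). change (x * (x * x ^ m)) with (x ^ S (S m)).
      apply pow_incr; lra. }
    assert (Hy : y * y ^ m <= x * x ^ m).
    { change (y * y ^ m) with (y ^ S m). change (x * x ^ m) with (x ^ S m). apply pow_incr; lra. }
    assert (0 <= y ^ m) by (apply pow_le; lra).
    assert (0 <= x ^ m) by (apply pow_le; lra).
    rewrite !S_INR in *.
    assert (E : x * (x * x ^ m) - y * (y * y ^ m) = x * (x * x ^ m - y * y ^ m) + (x - y) * (y * y ^ m)) by ring.
    rewrite E.
    assert (x * (x * x ^ m - y * y ^ m) <= x * ((INR m + 1) * x ^ m * (x - y))) by (apply Rmult_le_compat_l; lra).
    assert ((x - y) * (y * y ^ m) <= (x - y) * (x * x ^ m)) by (apply Rmult_le_compat_l; lra).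
    nra.
Qed.

Lemma pow_convex m x y : 0 <= x -> 0 <= y -> x ^ S m + INR (S m) * x ^ m * y <= (x + y) ^ S m.
Proof.
  induction m as [|m IH]; intros Hx Hy.
  - simpl. lra.
  - change ((x + y) ^ S (S m)) with ((x + y) * (x + y) ^ S m).
    assert (H := IH Hx Hy).
    assert (0 <= x ^ m) by (apply pow_le; lra).
    assert (0 <= x ^ S m) by (apply pow_le; lra).
    assert ((x + y) * (x ^ S m + INR (S m) * x ^ m * y) <= (x + y) * (x + y) ^ S m)
      by (apply Rmult_le_compat_l; lra).
    cbn [pow] in *. rewrite !S_INR in *.
    assert (0 <= y * (INR m + 1) * x ^ m * y).
    { apply Rmult_le_pos; [|lra]. apply Rmult_le_pos; [|lra]. apply Rmult_le_pos; [lra|].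
      pose proof (pos_INR m); lra. }
    nra.
Qed.

Lemma exp_pow x n : exp x ^ n = exp (INR n * x).
Proof.
  induction n as [|n IH]. simpl. rewrite Rmult_0_l, exp_0; auto.
  cbn [pow]. rewrite IH, <- exp_plus, S_INR. f_equal. ring.
Qed.

Lemma nn_fact n : INR n ^ n <= exp (INR n) * INR (Factorial.fact n).
Proof.
  induction n as [|n IH]. simpl. rewrite exp_0. lra.
  assert (Hk : INR (S n) ^ n <= exp 1 * INR n ^ n).
  { destruct n as [|n]. simpl. pose proof (exp_ineq1_le 1). lra.
    set (m := INR (S n)).
    assert (Hm : 0 < m) by (apply lt_0_INR; lia).
    replace (INR (S (S n))) with (m * (1 + / m)) by (unfold m; rewrite (S_INR (S n)); field; apply not_0_INR; lia).
    rewrite Rpow_mult_distr, (Rmult_comm (exp 1)). apply Rmult_le_compat_l. apply pow_le; lra.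
    apply Rle_trans with (exp (/ m) ^ S n).
    apply pow_incr. split. assert (0 < / m) by (apply Rinv_0_lt_compat; lra). lra. apply exp_ineq1_le.
    rewrite exp_pow. fold m. replace (m * / m) with 1 by (field; lra). lra. }
  rewrite fact_simpl, mult_INR. cbn [pow].
  rewrite S_INR at 3. rewrite exp_plus.
  assert (0 <= INR (S n)) by apply pos_INR.
  assert (0 < exp 1) by apply exp_pos.
  apply Rle_trans with (INR (S n) * (exp 1 * INR n ^ n)). apply Rmult_le_compat_l; auto.
  replace (exp (INR n) * exp 1 * (INR (S n) * INR (Factorial.fact n))) with
    (INR (S n) * (exp 1 * (exp (INR n) * INR (Factorial.fact n)))) by ring.
  apply Rmult_le_compat_l; auto. apply Rmult_le_compat_l; lra.
Qed.

Lemma exp_le x y : x <= y -> exp x <= exp y.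
Proof. intros H. destruct (Rle_lt_or_eq_dec _ _ H). left; apply exp_increasing; auto. subst; lra. Qed.

Section Core.
Variables (X : RVS) (al : R) (ah : option R) (B : R -> X -> Prop) (nrm : R -> X -> R)
  (C D : R -> X -> Prop) (A Z : X -> X) (S : R -> R -> X -> X) (nu omega : R) (M N : R -> R).
Hypothesis H1 : Assum_A1 al ah B nrm.
Hypothesis H2 : Assum_A2 al ah B nrm C D A S nu omega.
Hypothesis H3 : Assum_A3 al ah B nrm Z M N.
Variables (a0 b : R).
Hypothesis Ha0 : inI al ah a0.
Hypothesis Hb : inI al ah b.
Hypothesis Hab : a0 < b.

Lemma inI_mid a : a0 <= a <= b -> inI al ah a.
Proof.
  intros Ha. destruct Ha0 as [Hl _]. destruct Hb as [_ Hh]. split. lra.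
  destruct ah; auto; lra.
Qed.

Lemma BP a : inI al ah a -> subspace (B a) /\ norm_on (B a) (nrm a).
Proof. intros Ha. destruct H1 as [_ [_ [Hban _]]]. destruct (Hban a Ha) as [? [? _]]; auto. Qed.

Lemma Bmono a1 a2 u : inI al ah a1 -> inI al ah a2 -> a1 <= a2 -> B a1 u -> B a2 u /\ nrm a2 u <= nrm a1 u.
Proof. intros. destruct H1 as [_ [_ [_ Hm]]]. auto. Qed.

Lemma lin_sub (L : X -> X) : linear_BI al ah B L -> forall x y, B a0 x -> B a0 y ->
  L (vsub x y) = vsub (L x) (L y).
Proof.
  intros [_ HL] x y Hx Hy.
  assert (Ix : inBI al ah B x) by (exists a0; auto).
  assert (Iy : inBI al ah B y) by (exists a0; auto).
  assert (Iy' : inBI al ah B (vscal (-1) y)).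
  { exists a0; split; auto. apply (Pscal _ _ (proj1 (BP a0 Ha0))); auto. }
  unfold vsub. rewrite !vopp_scal. destruct (HL x (vscal (-1) y) 0 Ix Iy') as [-> _].
  destruct (HL y y (-1) Iy Iy) as [_ ->]. auto.
Qed.

Lemma lin_zero0 (L : X -> X) : linear_BI al ah B L -> L vzero = vzero.
Proof.
  intros HL. assert (B a0 vzero) by apply (P0 _ _ (proj1 (BP a0 Ha0))).
  replace (@vzero X) with (vsub (@vzero X) vzero) by vring (@vzero X :: nil).
  rewrite (lin_sub L HL) by auto. vring (L vzero :: nil).
Qed.

Lemma Alin : linear_BI al ah B A. Proof. apply H2. Qed.
Lemma Zlin : linear_BI al ah B Z. Proof. apply H3. Qed.

Definition nu1 := nu * exp (Rabs omega).

Section InA.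
Variable a : R.
Hypothesis Ha1 : a0 < a.
Hypothesis Ha2 : a <= b.
Lemma Ia : inI al ah a. Proof. apply inI_mid; lra. Qed.

Lemma Cdata : closed_subspace (B a) (nrm a) (C a) /\ dense_subspace (C a) (nrm a) (D a) /\
     C0_generator (C a) (nrm a) A (D a) (S a).
Proof. apply H2, Ia. Qed.

Lemma C_B x : C a x -> B a x. Proof. apply Cdata. Qed.
Lemma C_sub : subspace (C a). Proof. apply Cdata. Qed.
Lemma D_C x : D a x -> C a x. Proof. apply Cdata. Qed.
Lemma B0_D x : B a0 x -> D a x.
Proof. destruct H2 as [_ [_ [Hn _]]]. apply (Hn a0 a Ha0 Ia Ha1). Qed.
Lemma B0_C x : B a0 x -> C a x. Proof. intros; apply D_C, B0_D; auto. Qed.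
Lemma B0_Ba x : B a0 x -> B a x /\ nrm a x <= nrm a0 x.
Proof. intros; apply Bmono; auto. apply Ia. lra. Qed.

Lemma SC t x : 0 <= t -> C a x -> C a (S a t x).
Proof. intros Ht Hx. destruct Cdata as [_ [_ [HS _]]]. apply (HS t Ht); auto. Qed.
Lemma S_sub t x y : 0 <= t -> C a x -> C a y -> S a t (vsub x y) = vsub (S a t x) (S a t y).
Proof.
  intros Ht Hx Hy. destruct Cdata as [_ [_ [HS _]]]. destruct (HS t Ht) as [_ [Hl _]].
  unfold vsub. rewrite !vopp_scal.
  assert (C a (vscal (-1) y)) by (apply (Pscal _ _ C_sub); auto).
  destruct (Hl x (vscal (-1) y) 0 Hx H) as [-> _].
  destruct (Hl y y (-1) Hy Hy) as [_ ->]. auto.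
Qed.
Lemma S_scal t k x : 0 <= t -> C a x -> S a t (vscal k x) = vscal k (S a t x).
Proof.
  intros Ht Hx. destruct Cdata as [_ [_ [HS _]]]. destruct (HS t Ht) as [_ [Hl _]].
  apply (Hl x x k Hx Hx).
Qed.
Lemma S_zero t : 0 <= t -> S a t vzero = vzero.
Proof.
  intros Ht. assert (C a vzero) by apply (P0 _ _ C_sub).
  rewrite <- (vscal0 _ (@vzero X)) at 1. rewrite S_scal by auto. apply vscal0.
Qed.
Lemma S_0 x : C a x -> S a 0 x = x.
Proof. destruct Cdata as [_ [_ [_ [HS _]]]]. auto. Qed.
Lemma S_comp t r x : 0 <= t -> 0 <= r -> C a x -> S a (t + r) x = S a t (S a r x).
Proof. destruct Cdata as [_ [_ [_ [_ [HS _]]]]]. auto. Qed.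
Lemma S_cont x : C a x -> lim_right0 (nrm a) (fun h => S a h x) x.
Proof. destruct Cdata as [_ [_ [_ [_ [_ [HS _]]]]]]. auto. Qed.
Lemma S_gen x : D a x -> lim_right0 (nrm a) (fun h => vscal (/ h) (vsub (S a h x) x)) (A x).
Proof. destruct Cdata as [_ [_ [_ [_ [_ [_ [_ HS]]]]]]]. auto. Qed.
Lemma S_bound t x : 0 <= t <= 1 -> C a x -> nrm a (S a t x) <= nu1 * nrm a x.
Proof.
  intros Ht Hx. destruct H2 as [_ [_ [_ [Hnu HB]]]].
  apply Rle_trans with (nu * exp (omega * t) * nrm a x). apply HB; auto. apply Ia. lra.
  assert (0 <= nrm a x) by (apply (n_ge0 _ _ _ (proj1 (BP a Ia)) (proj2 (BP a Ia))), C_B; auto).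
  unfold nu1. apply Rmult_le_compat_r; auto. apply Rmult_le_compat_l. lra.
  apply exp_le. assert (Rabs omega * t <= Rabs omega * 1).
  { apply Rmult_le_compat_l. apply Rabs_pos. lra. }
  assert (omega * t <= Rabs omega * t).
  { apply Rmult_le_compat_r. lra. apply Rle_abs. }
  lra.
Qed.
End InA.

Lemma nu1_ge1 : 1 <= nu1.
Proof.
  unfold nu1. destruct H2 as [_ [_ [_ [Hnu _]]]].
  assert (1 <= exp (Rabs omega)) by (pose proof (exp_ineq1_le (Rabs omega)); pose proof (Rabs_pos omega); lra).
  nra.
Qed.

Definition L0 := M b + N b * (b - a0).
Definition LL := nu1 * L0.

Lemma L0_pos : 0 < L0.
Proof.
  unfold L0. destruct H3 as [Hp _]. destruct (Hp b Hb). assert (0 < N b * (b - a0)) by (apply Rmult_lt_0_compat; lra). lra.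
Qed.
Lemma LL_pos : 0 < LL.
Proof. unfold LL. pose proof nu1_ge1. pose proof L0_pos. nra. Qed.

Lemma Zb a1 a2 u : a0 <= a1 -> a1 < a2 -> a2 <= b -> B a1 u ->
  B a2 (Z u) /\ nrm a2 (Z u) <= L0 / (a2 - a1) * nrm a1 u.
Proof.
  intros h1 h2 h3 Hu. destruct H3 as [Hp [_ [_ [_ HZ]]]].
  assert (al < a1) by (destruct Ha0; lra).
  destruct (HZ b a1 a2 u Hb H h2 h3 Hu) as [HB HN]. split; auto.
  apply Rle_trans with (1 := HN). apply Rmult_le_compat_r.
  apply (n_ge0 _ _ _ (proj1 (BP a1 (inI_mid a1 ltac:(lra)))) (proj2 (BP a1 (inI_mid a1 ltac:(lra))))); auto.
  unfold L0. destruct (Hp b Hb).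
  apply Rmult_le_reg_r with (a2 - a1). lra.
  replace ((M b / (a2 - a1) + N b) * (a2 - a1)) with (M b + N b * (a2 - a1)) by (field; lra).
  replace ((M b + N b * (b - a0)) / (a2 - a1) * (a2 - a1)) with (M b + N b * (b - a0)) by (field; lra).
  assert (N b * (a2 - a1) <= N b * (b - a0)) by (apply Rmult_le_compat_l; lra). lra.
Qed.

Definition Dq (w : R -> X) (r h : R) : X :=
  vsub (vscal (/ h) (vsub (w (r + h)) (w r))) (vadd (A (w r)) (Z (w r))).

Ltac memb HP := repeat first [assumption | apply (P0 _ _ HP) | apply (Psub _ _ HP) | apply (Pscal _ _ HP)
  | apply (Popp _ _ HP) | apply (Padd _ _ HP)].

Lemma deriv_cont (w : R -> X) lo hi :
  (forall r, lo <= r <= hi -> B a0 (w r) /\ B a0 (A (w r)) /\ B a0 (Z (w r))) ->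
  (forall r, lo <= r <= hi -> forall eps, 0 < eps -> exists delta, 0 < delta /\
     forall h, h <> 0 -> Rabs h < delta -> lo <= r + h <= hi -> nrm a0 (Dq w r h) < eps) ->
  forall r, lo <= r <= hi -> forall eps, 0 < eps -> exists delta, 0 < delta /\
     forall h, Rabs h < delta -> lo <= r + h <= hi -> nrm a0 (vsub (w (r + h)) (w r)) < eps.
Proof.
  intros HBw Hd r Hr eps Heps.
  destruct (BP a0 Ha0) as [HP HN].
  destruct (Hd r Hr 1 ltac:(lra)) as [d1 [Hd1 Hd1']].
  destruct (HBw r Hr) as [Bw [BA BZ]].
  set (Q := nrm a0 (vadd (A (w r)) (Z (w r)))).
  assert (HQ : 0 <= Q) by (apply (n_ge0 _ _ _ HP HN); memb HP).
  exists (Rmin d1 (eps / (1 + Q))). split.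
  { apply Rmin_pos; auto. apply Rdiv_lt_0_compat; lra. }
  intros h Hh Hrh.
  assert (Hh1 : Rabs h < d1) by (apply Rlt_le_trans with (1 := Hh); apply Rmin_l).
  assert (Hh2 : Rabs h < eps / (1 + Q)) by (apply Rlt_le_trans with (1 := Hh); apply Rmin_r).
  destruct (Req_dec h 0) as [->|Hh0].
  { rewrite Rplus_0_r, (n_sub_self _ _ _ HP HN). auto. }
  assert (Bwh : B a0 (w (r + h))) by (apply HBw; lra).
  replace (vsub (w (r + h)) (w r)) with (vscal h (vadd (Dq w r h) (vadd (A (w r)) (Z (w r)))))
    by (unfold Dq; vring (w (r + h) :: w r :: A (w r) :: Z (w r) :: nil)).
  assert (BDq : B a0 (Dq w r h)) by (unfold Dq; memb HP).
  rewrite (n_scal _ _ _ HP HN) by memb HP.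
  assert (Ht : nrm a0 (vadd (Dq w r h) (vadd (A (w r)) (Z (w r)))) <= nrm a0 (Dq w r h) + Q)
    by (apply (n_tri _ _ _ HP HN); memb HP).
  assert (HD : nrm a0 (Dq w r h) < 1) by (apply Hd1'; auto).
  assert (0 <= Rabs h) by apply Rabs_pos.
  apply Rle_lt_trans with (Rabs h * (1 + Q)). apply Rmult_le_compat_l; lra.
  apply Rmult_lt_reg_r with (/ (1 + Q)). apply Rinv_0_lt_compat; lra.
  rewrite Rmult_assoc, Rinv_r, Rmult_1_r by lra. exact Hh2.
Qed.

Lemma Rabs_pos_h h : 0 < h -> Rabs h = h.
Proof. intros; apply Rabs_pos_eq; lra. Qed.

Lemma step (w : R -> X) (c eta K a' d : R) (k : nat) :
  0 < eta <= 1 -> 0 < d -> a0 <= a' -> a' + d <= b -> 0 <= K ->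
  (forall r, c <= r <= c + eta -> B a0 (w r) /\ B a0 (A (w r)) /\ B a0 (Z (w r))) ->
  (forall r, c <= r <= c + eta -> forall eps, 0 < eps -> exists delta, 0 < delta /\
     forall h, h <> 0 -> Rabs h < delta -> c <= r + h <= c + eta -> nrm a0 (Dq w r h) < eps) ->
  w c = vzero ->
  (forall r, c <= r <= c + eta -> nrm a' (w r) <= K * (LL * (r - c) / d) ^ k / INR (Factorial.fact k)) ->
  forall r, c <= r <= c + eta -> nrm (a' + d) (w r) <= K * (LL * (r - c) / d) ^ Datatypes.S k / INR (Factorial.fact (Datatypes.S k)).
Proof.
  intros Heta Hd Ha' Had HK HBw Hdw Hwc IH r Hr.
  set (a := a' + d).
  assert (Ha1 : a0 < a) by (unfold a; lra).
  assert (Ha2 : a <= b) by (unfold a; lra).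
  destruct (BP a (Ia a Ha1 Ha2)) as [HP HN].
  destruct (BP a0 Ha0) as [HP0 HN0].
  assert (HC := C_sub a Ha1 Ha2).
  assert (Hcont := deriv_cont w c (c + eta) HBw Hdw).
  assert (Hnu := nu1_ge1). assert (HL := LL_pos). assert (HL0 := L0_pos).
  set (q := LL / d).
  assert (Hq : 0 < q) by (unfold q; apply Rdiv_lt_0_compat; lra).
  set (Kc := K * q ^ Datatypes.S k / INR (Factorial.fact (Datatypes.S k))).
  assert (HKc : 0 <= Kc).
  { unfold Kc. apply Rmult_le_pos. apply Rmult_le_pos; auto. apply pow_le; lra.
    left; apply Rinv_0_lt_compat, INR_fact_lt_0. }
  set (F := fun s => S a (r - s) (w s)).
  set (phi := fun s => Kc * (s - c) ^ Datatypes.S k).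
  assert (HFr : F r = w r).
  { unfold F. rewrite Rminus_diag. apply S_0; auto. apply B0_C; auto. apply HBw; lra. }
  assert (HFc : F c = vzero).
  { unfold F. rewrite Hwc. apply S_zero; auto. lra. }
  assert (Hm : nrm a (vsub (F r) (F c)) <= phi r - phi c).
  { apply (mvt _ _ _ HP HN); try lra.
    - intros s Hs. unfold F. apply C_B; auto. apply SC; auto. lra. apply B0_C; auto. apply HBw; lra.
    -
      intros s Hs eps Heps.
      set (e1 := eps / (2 * nu1)).
      assert (He1 : 0 < e1) by (unfold e1; apply Rdiv_lt_0_compat; lra).
      assert (Bws : B a0 (w s)) by (apply HBw; lra).
      destruct (Hcont s ltac:(lra) e1 He1) as [d1 [Hd1 Hd1']].
      destruct (S_cont a Ha1 Ha2 (w s) (B0_C a Ha1 Ha2 _ Bws) e1 He1) as [d2 [Hd2 Hd2']].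
      set (Cp := Kc * INR (Datatypes.S k) * eta ^ k).
      assert (HCp : 0 <= Cp).
      { unfold Cp. apply Rmult_le_pos. apply Rmult_le_pos; auto. apply pos_INR. apply pow_le; lra. }
      set (d3 := eps / (Cp + 1)).
      assert (Hd3 : 0 < d3) by (unfold d3; apply Rdiv_lt_0_compat; lra).
      exists (Rmin d1 (Rmin d2 d3)). split. repeat apply Rmin_pos; auto.
      intros h Hh Hsh.
      assert (h1 : h < d1) by (apply Rlt_le_trans with (1 := proj2 Hh); apply Rmin_l).
      assert (h2 : h < d2) by (apply Rlt_le_trans with (1 := proj2 Hh); eapply Rle_trans; [apply Rmin_r|apply Rmin_l]).
      assert (h3 : h < d3) by (apply Rlt_le_trans with (1 := proj2 Hh); eapply Rle_trans; [apply Rmin_r|apply Rmin_r]).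
      assert (Bwsh : B a0 (w (s - h))) by (apply HBw; lra).
      assert (Cws := B0_C a Ha1 Ha2 _ Bws).
      assert (Cwsh := B0_C a Ha1 Ha2 _ Bwsh).
      assert (CSh : C a (S a h (w s))) by (apply SC; auto; lra).
      split.
      + assert (Eid : vsub (F s) (F (s - h)) =
                vadd (S a (r - s + h) (vsub (w s) (w (s - h)))) (S a (r - s) (vsub (w s) (S a h (w s))))).
        { unfold F. replace (r - (s - h)) with (r - s + h) by ring.
          rewrite !S_sub by (auto; lra).
          rewrite (S_comp a Ha1 Ha2 (r - s) h (w s)) by (auto; lra).
          vring (S a (r - s) (w s) :: S a (r - s) (S a h (w s)) :: S a (r - s + h) (w (s - h)) :: nil). }
        rewrite Eid.
        assert (C1 : C a (vsub (w s) (w (s - h)))) by memb HC.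
        assert (C2 : C a (vsub (w s) (S a h (w s)))) by memb HC.
        eapply Rle_lt_trans. apply (n_tri _ _ _ HP HN); apply C_B; auto; apply SC; auto; lra.
        assert (T1 : nrm a (S a (r - s + h) (vsub (w s) (w (s - h)))) <= nu1 * nrm a (vsub (w s) (w (s - h))))
          by (apply S_bound; auto; lra).
        assert (T2 : nrm a (S a (r - s) (vsub (w s) (S a h (w s)))) <= nu1 * nrm a (vsub (w s) (S a h (w s))))
          by (apply S_bound; auto; lra).
        assert (T3 : nrm a (vsub (w s) (w (s - h))) < e1).
        { apply Rle_lt_trans with (nrm a0 (vsub (w s) (w (s - h)))).
          apply (B0_Ba a Ha1 Ha2). memb HP0.
          rewrite (n_sub_sym _ _ _ HP0 HN0) by auto.
          replace (s - h) with (s + - h) by ring. apply Hd1'. rewrite Rabs_Ropp, Rabs_pos_h; lra. lra. }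
        assert (T4 : nrm a (vsub (w s) (S a h (w s))) < e1).
        { rewrite (n_sub_sym _ _ _ HP HN) by (apply C_B; auto). apply Hd2'. lra. }
        assert (nu1 * e1 = eps / 2) by (unfold e1; field; lra).
        assert (nu1 * nrm a (vsub (w s) (w (s - h))) <= nu1 * e1) by (apply Rmult_le_compat_l; lra).
        assert (nu1 * nrm a (vsub (w s) (S a h (w s))) <= nu1 * e1) by (apply Rmult_le_compat_l; lra).
        nra.
      + unfold phi.
        assert (Hpd := pow_diff_le k (s - c) (s - h - c) ltac:(lra)).
        assert (Hpi : (s - h - c) ^ Datatypes.S k <= (s - c) ^ Datatypes.S k) by (apply pow_incr; lra).
        assert (Hek : (s - c) ^ k <= eta ^ k) by (apply pow_incr; lra).
        assert (0 <= (s - c) ^ k) by (apply pow_le; lra).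
        assert (0 <= INR (Datatypes.S k)) by apply pos_INR.
        replace (s - h - c) with (s - c - h) in * by ring.
        rewrite Rabs_pos_eq.
        2: { replace (s - h - c) with (s - c - h) by ring. assert (0 <= Kc * ((s - c) ^ Datatypes.S k - (s - c - h) ^ Datatypes.S k)) by (apply Rmult_le_pos; lra). nra. }
        replace (s - h - c) with (s - c - h) by ring.
        apply Rle_lt_trans with (Cp * h).
        { unfold Cp. replace (s - c - (s - c - h)) with h in Hpd by ring.
          assert (Kc * ((s - c) ^ Datatypes.S k - (s - c - h) ^ Datatypes.S k) <= Kc * (INR (Datatypes.S k) * (s - c) ^ k * h))
            by (apply Rmult_le_compat_l; auto).
          assert (INR (Datatypes.S k) * (s - c) ^ k * h <= INR (Datatypes.S k) * eta ^ k * h).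
          { apply Rmult_le_compat_r. lra. apply Rmult_le_compat_l; auto. }
          assert (Kc * (INR (Datatypes.S k) * (s - c) ^ k * h) <= Kc * (INR (Datatypes.S k) * eta ^ k * h)) by (apply Rmult_le_compat_l; auto).
          nra. }
        apply Rle_lt_trans with (Cp * d3). apply Rmult_le_compat_l; lra.
        unfold d3. apply Rmult_lt_reg_r with (Cp + 1). lra.
        replace (Cp * (eps / (Cp + 1)) * (Cp + 1)) with (Cp * eps) by (field; lra). nra.
    -
      intros s Hs eps Heps.
      set (e1 := eps / (2 * nu1)).
      assert (He1 : 0 < e1) by (unfold e1; apply Rdiv_lt_0_compat; lra).
      destruct (HBw s ltac:(lra)) as [Bws [BAs BZs]].
      destruct (Hdw s ltac:(lra) e1 He1) as [d1 [Hd1 Hd1']].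
      destruct (S_gen a Ha1 Ha2 (w s) (B0_D a Ha1 Ha2 _ Bws) e1 He1) as [d2 [Hd2 Hd2']].
      exists (Rmin d1 d2). split. apply Rmin_pos; auto.
      intros h Hh Hsh.
      assert (h1 : h < d1) by (apply Rlt_le_trans with (1 := proj2 Hh); apply Rmin_l).
      assert (h2 : h < d2) by (apply Rlt_le_trans with (1 := proj2 Hh); apply Rmin_r).
      assert (Hh0 : h <> 0) by lra.
      assert (Bwsh : B a0 (w (s + h))) by (apply HBw; lra).
      assert (Cws := B0_C a Ha1 Ha2 _ Bws).
      assert (Cwsh := B0_C a Ha1 Ha2 _ Bwsh).
      assert (CAs := B0_C a Ha1 Ha2 _ BAs).
      assert (CZs := B0_C a Ha1 Ha2 _ BZs).
      assert (CSh : C a (S a h (w s))) by (apply SC; auto; lra).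
      set (Gh := vscal (/ h) (vsub (S a h (w s)) (w s))).
      set (Y := vadd (vsub (Dq w s h) (vsub Gh (A (w s)))) (Z (w s))).
      assert (Eid : vsub (F (s + h)) (F s) = S a (r - s - h) (vscal h Y)).
      { unfold F. replace (r - (s + h)) with (r - s - h) by ring.
        assert (E : S a (r - s) (w s) = S a (r - s - h) (S a h (w s))).
        { rewrite <- (S_comp a Ha1 Ha2) by (auto; lra). f_equal. ring. }
        rewrite E, <- (S_sub a Ha1 Ha2) by (auto; lra). f_equal.
        unfold Y, Gh, Dq. vring (w (s + h) :: w s :: S a h (w s) :: A (w s) :: Z (w s) :: nil). }
      rewrite Eid.
      assert (BDq : B a0 (Dq w s h)) by (unfold Dq; memb HP0).
      assert (CDq := B0_C a Ha1 Ha2 _ BDq).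
      assert (CGh : C a Gh) by (unfold Gh; memb HC).
      assert (CY : C a Y) by (unfold Y; memb HC).
      assert (T1 : nrm a (S a (r - s - h) (vscal h Y)) <= nu1 * nrm a (vscal h Y))
        by (apply S_bound; auto; [lra | memb HC]).
      rewrite (n_scal _ _ _ HP HN), Rabs_pos_h in T1 by (try lra; apply C_B; auto).
      assert (T2 : nrm a Y <= nrm a (Dq w s h) + nrm a (vsub Gh (A (w s))) + nrm a (Z (w s))).
      { unfold Y. eapply Rle_trans. apply (n_tri _ _ _ HP HN); apply C_B; auto; memb HC.
        assert (nrm a (vsub (Dq w s h) (vsub Gh (A (w s)))) <= nrm a (Dq w s h) + nrm a (vsub Gh (A (w s)))).
        { unfold vsub at 1. eapply Rle_trans. apply (n_tri _ _ _ HP HN); apply C_B; auto; memb HC.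
          rewrite (n_opp _ _ _ HP HN) by (apply C_B; memb HC). lra. }
        lra. }
      assert (T3 : nrm a (Dq w s h) < e1).
      { apply Rle_lt_trans with (nrm a0 (Dq w s h)). apply (B0_Ba a Ha1 Ha2); auto.
        apply Hd1'; auto. rewrite Rabs_pos_h; lra. lra. }
      assert (T4 : nrm a (vsub Gh (A (w s))) < e1) by (apply Hd2'; lra).
      assert (T5 : nrm a (Z (w s)) <= L0 / d * nrm a' (w s)).
      { destruct (Zb a' a (w s) Ha' ltac:(unfold a; lra) Ha2) as [_ Hz].
        apply (proj1 (Bmono a0 a' (w s) Ha0 (inI_mid a' ltac:(lra)) Ha' Bws)).
        assert (Ead : a - a' = d) by (unfold a; ring). rewrite Ead in Hz. auto. }
      assert (T6 := IH s ltac:(lra)).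
      assert (Hpc := pow_convex k (s - c) h ltac:(lra) ltac:(lra)).
      unfold phi. replace (s + h - c) with (s - c + h) by ring.
      replace (LL * (s - c) / d) with (q * (s - c)) in T6 by (unfold q; field; lra).
      rewrite Rpow_mult_distr in T6.
      assert (Hfact : INR (Factorial.fact (Datatypes.S k)) = INR (Datatypes.S k) * INR (Factorial.fact k)) by (rewrite fact_simpl, mult_INR; auto).
      assert (HfK : 0 < INR (Factorial.fact k)) by apply INR_fact_lt_0.
      assert (HSk : 0 < INR (Datatypes.S k)) by (apply lt_0_INR, Nat.lt_0_succ).
      assert (Hz : 0 <= nrm a' (w s)) by (apply (n_ge0 _ _ _ (proj1 (BP a' (inI_mid a' ltac:(lra)))) (proj2 (BP a' (inI_mid a' ltac:(lra))))); apply (proj1 (Bmono a0 a' (w s) Ha0 (inI_mid a' ltac:(lra)) Ha' Bws))).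
      assert (Eq1 : nu1 * (L0 / d) = q) by (unfold q, LL; field; lra).
      assert (Eq2 : Kc * INR (Datatypes.S k) = K * q ^ Datatypes.S k / INR (Factorial.fact k)) by (unfold Kc; rewrite Hfact; field; lra).
      assert (Hsk : 0 <= (s - c) ^ k) by (apply pow_le; lra).
      assert (Hqk : 0 < q ^ k) by (apply pow_lt; lra).
      assert (B1 : nu1 * nrm a (Z (w s)) <= K * q ^ Datatypes.S k / INR (Factorial.fact k) * (s - c) ^ k).
      { apply Rle_trans with (nu1 * (L0 / d * nrm a' (w s))). apply Rmult_le_compat_l; lra.
        rewrite <- Rmult_assoc, Eq1.
        apply Rle_trans with (q * (K * (q ^ k * (s - c) ^ k) / INR (Factorial.fact k))). apply Rmult_le_compat_l; lra.
        change (q ^ Datatypes.S k) with (q * q ^ k). apply Req_le. field. lra. }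
      assert (B2 : Kc * ((s - c) ^ Datatypes.S k + INR (Datatypes.S k) * (s - c) ^ k * h) <= Kc * (s - c + h) ^ Datatypes.S k)
        by (apply Rmult_le_compat_l; auto).
      assert (B3 : nu1 * (2 * e1) = eps) by (unfold e1; field; lra).
      assert (F1 : nu1 * (h * nrm a Y) <= h * eps + h * (nu1 * nrm a (Z (w s)))).
      { assert (nrm a Y <= 2 * e1 + nrm a (Z (w s))) by lra.
        apply Rle_trans with (nu1 * (h * (2 * e1 + nrm a (Z (w s))))).
        apply Rmult_le_compat_l; [lra|]. apply Rmult_le_compat_l; lra.
        rewrite <- B3. right; ring. }
      assert (F2 : h * (nu1 * nrm a (Z (w s))) <= h * (Kc * INR (Datatypes.S k) * (s - c) ^ k)).
      { apply Rmult_le_compat_l. lra. rewrite Eq2. exact B1. }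
      lra.
  }
  replace (vsub (F r) (F c)) with (w r) in Hm by (rewrite HFr, HFc; vring (w r :: nil)).
  unfold phi in Hm. rewrite Rminus_diag, pow_i in Hm by apply Nat.lt_0_succ.
  replace (LL * (r - c) / d) with (q * (r - c)) by (unfold q; field; lra).
  rewrite Rpow_mult_distr. unfold Kc in Hm. apply Rle_trans with (1 := Hm). apply Req_le.
  field. pose proof (INR_fact_lt_0 (Datatypes.S k)). lra.
Qed.

Lemma local (w : R -> X) (c eta K : R) :
  0 < eta <= 1 -> exp 1 * LL * eta <= (b - a0) / 2 ->
  (forall r, c <= r <= c + eta -> B a0 (w r) /\ B a0 (A (w r)) /\ B a0 (Z (w r))) ->
  (forall r, c <= r <= c + eta -> forall eps, 0 < eps -> exists delta, 0 < delta /\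
     forall h, h <> 0 -> Rabs h < delta -> c <= r + h <= c + eta -> nrm a0 (Dq w r h) < eps) ->
  (forall r, c <= r <= c + eta -> nrm a0 (w r) <= K) ->
  w c = vzero ->
  forall r, c <= r <= c + eta -> w r = vzero.
Proof.
  intros Heta Hsmall HBw Hdw HK Hwc r Hr.
  destruct (BP a0 Ha0) as [HP0 HN0]. destruct (BP b Hb) as [HPb HNb].
  assert (HK0 : 0 <= K).
  { apply Rle_trans with (nrm a0 (w c)). apply (n_ge0 _ _ _ HP0 HN0). apply HBw; lra. apply HK; lra. }
  assert (HL := LL_pos).
  assert (Claim : forall nn : nat, (0 < nn)%nat -> forall k, (k <= nn)%nat -> forall r, c <= r <= c + eta ->
    nrm (a0 + INR k * ((b - a0) / INR nn)) (w r) <=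
      K * (LL * (r - c) / ((b - a0) / INR nn)) ^ k / INR (Factorial.fact k)).
  { intros nn Hnn. assert (Hn : 0 < INR nn) by (apply lt_0_INR; auto).
    set (d := (b - a0) / INR nn).
    assert (Hd : 0 < d) by (unfold d; apply Rdiv_lt_0_compat; lra).
    assert (Hnd : INR nn * d = b - a0) by (unfold d; field; lra).
    induction k as [|k IHk].
    - intros _ r0 Hr0. replace (a0 + INR 0 * d) with a0 by (simpl; ring).
      replace (K * (LL * (r0 - c) / d) ^ 0 / INR (Factorial.fact 0)) with K by (simpl; field).
      apply HK; auto.
    - intros Hk r0 Hr0.
      assert (Hk' : (k <= nn)%nat) by lia.
      assert (Hle : INR (Datatypes.S k) <= INR nn) by (apply le_INR; auto).
      rewrite S_INR in Hle.
      assert (0 <= INR k) by apply pos_INR.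
      assert (E : a0 + INR (Datatypes.S k) * d = (a0 + INR k * d) + d) by (rewrite S_INR; ring).
      rewrite E. apply (step w c eta K); auto.
      + assert (0 <= INR k * d) by (apply Rmult_le_pos; lra). lra.
      + assert ((INR k + 1) * d <= INR nn * d) by (apply Rmult_le_compat_r; lra). lra. }
  assert (Hx : forall nn : nat, (0 < nn)%nat -> nrm b (w r) <= K * (/ 2) ^ nn).
  { intros nn Hnn. assert (Hn : 0 < INR nn) by (apply lt_0_INR; auto).
    assert (Hc := Claim nn Hnn nn (Nat.le_refl _) r Hr).
    replace (a0 + INR nn * ((b - a0) / INR nn)) with b in Hc by (field; lra).
    apply Rle_trans with (1 := Hc).
    set (x := LL * (r - c) / (b - a0)).
    assert (Hx0 : 0 <= x) by (unfold x; apply Rmult_le_pos; [apply Rmult_le_pos; lra | left; apply Rinv_0_lt_compat; lra]).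
    assert (Hxe : exp 1 * x <= / 2).
    { unfold x. apply Rmult_le_reg_r with (b - a0). lra.
      replace (exp 1 * (LL * (r - c) / (b - a0)) * (b - a0)) with (exp 1 * LL * (r - c)) by (field; lra).
      assert (exp 1 * LL * (r - c) <= exp 1 * LL * eta).
      { apply Rmult_le_compat_l. pose proof (exp_pos 1). nra. lra. }
      lra. }
    replace (LL * (r - c) / ((b - a0) / INR nn)) with (x * INR nn) by (unfold x; field; lra).
    rewrite Rpow_mult_distr.
    assert (Hf : INR nn ^ nn <= exp 1 ^ nn * INR (Factorial.fact nn)).
    { rewrite exp_pow, Rmult_1_r. apply nn_fact. }
    assert (HfK : 0 < INR (Factorial.fact nn)) by apply INR_fact_lt_0.
    assert (Hxn : 0 <= x ^ nn) by (apply pow_le; lra).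
    apply Rle_trans with (K * (x ^ nn * (exp 1 ^ nn * INR (Factorial.fact nn))) / INR (Factorial.fact nn)).
    { unfold Rdiv. apply Rmult_le_compat_r. left; apply Rinv_0_lt_compat; auto.
      apply Rmult_le_compat_l; auto. apply Rmult_le_compat_l; auto. }
    replace (K * (x ^ nn * (exp 1 ^ nn * INR (Factorial.fact nn))) / INR (Factorial.fact nn))
      with (K * (exp 1 * x) ^ nn) by (rewrite Rpow_mult_distr; field; lra).
    apply Rmult_le_compat_l; auto. apply pow_incr. split; auto.
    apply Rmult_le_pos; auto. pose proof (exp_pos 1); lra. }
  assert (Bwr : B a0 (w r)) by (apply HBw; auto).
  assert (Bwb : B b (w r)) by (apply (Bmono a0 b); auto; lra).
  apply (n_eq0 _ _ _ HPb HNb); auto.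
  assert (Hv : 0 <= nrm b (w r)) by (apply (n_ge0 _ _ _ HPb HNb); auto).
  destruct (Rle_lt_or_eq_dec _ _ Hv) as [Hv'|]; auto. exfalso.
  assert (Hh : Rabs (/ 2) < 1) by (rewrite Rabs_pos_eq; lra).
  destruct (pow_lt_1_zero (/ 2) Hh (nrm b (w r) / (K + 1))) as [N0 HN0'].
  { apply Rdiv_lt_0_compat; lra. }
  assert (H1' := HN0' (Datatypes.S N0) ltac:(lia)).
  assert (H2' := Hx (Datatypes.S N0) ltac:(lia)).
  assert (Hp : 0 <= (/ 2) ^ Datatypes.S N0) by (apply pow_le; lra).
  rewrite Rabs_pos_eq in H1' by auto.
  assert (K * (/ 2) ^ Datatypes.S N0 <= (K + 1) * (/ 2) ^ Datatypes.S N0) by nra.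
  assert ((K + 1) * (/ 2) ^ Datatypes.S N0 < nrm b (w r)).
  { apply Rmult_lt_reg_r with (/ (K + 1)). apply Rinv_0_lt_compat; lra.
    replace ((K + 1) * (/ 2) ^ Datatypes.S N0 * / (K + 1)) with ((/ 2) ^ Datatypes.S N0) by (field; lra).
    exact H1'. }
  lra.
Qed.

Lemma global (w : R -> X) (lo hi : R) :
  lo <= hi ->
  (forall r, lo <= r <= hi -> B a0 (w r) /\ B a0 (A (w r)) /\ B a0 (Z (w r))) ->
  (forall r, lo <= r <= hi -> forall eps, 0 < eps -> exists delta, 0 < delta /\
     forall h, h <> 0 -> Rabs h < delta -> lo <= r + h <= hi -> nrm a0 (Dq w r h) < eps) ->
  w lo = vzero -> w hi = vzero.
Proof.
  intros Hlh HBw Hdw Hwlo.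
  destruct (BP a0 Ha0) as [HP0 HN0].
  assert (Hcont := deriv_cont w lo hi HBw Hdw).
  assert (HL := LL_pos).
  set (E := fun x => lo <= x <= hi /\ forall y, lo <= y <= x -> w y = vzero).
  assert (HEa : E lo) by (split; [lra | intros y Hy; replace y with lo by lra; auto]).
  assert (Hbd : bound E) by (exists hi; intros x [Hx _]; lra).
  destruct (completeness E Hbd (ex_intro _ lo HEa)) as [c [Hc1 Hc2]].
  assert (Hac : lo <= c) by (apply Hc1; auto).
  assert (Hcb : c <= hi) by (apply Hc2; intros x [Hx _]; lra).
  assert (Cl1 : forall y, lo <= y < c -> w y = vzero).
  { intros y Hy. destruct (Classical_Prop.classic (exists x, E x /\ y <= x)) as [[x [[_ Hx] Hyx]]|Hno].
    - apply Hx; lra.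
    - exfalso. assert (c <= y); [|lra]. apply Hc2. intros x Ex.
      destruct (Rle_lt_dec x y); auto. exfalso; apply Hno; exists x; split; auto; lra. }
  assert (Cl2 : w c = vzero).
  { destruct (Rle_lt_or_eq_dec _ _ Hac) as [Hlc|<-]; auto.
    assert (Bwc : B a0 (w c)) by (apply HBw; lra).
    apply (n_eq0 _ _ _ HP0 HN0); auto.
    assert (Hv : 0 <= nrm a0 (w c)) by (apply (n_ge0 _ _ _ HP0 HN0); auto).
    destruct (Rle_lt_or_eq_dec _ _ Hv) as [Hv'|]; auto. exfalso.
    destruct (Hcont c ltac:(lra) _ Hv') as [d [Hd Hd']].
    set (h := Rmin (d / 2) ((c - lo) / 2)).
    assert (Hh : 0 < h < d) by (split; [apply Rmin_pos; lra | apply Rle_lt_trans with (d/2); [apply Rmin_l | lra]]).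
    assert (Hh2 : h <= (c - lo) / 2) by apply Rmin_r.
    assert (Hx := Hd' (- h) ltac:(rewrite Rabs_Ropp, Rabs_pos_eq; lra) ltac:(lra)).
    rewrite (Cl1 (c + - h)) in Hx by lra.
    replace (vsub vzero (w c)) with (vopp (w c)) in Hx by vring (w c :: nil).
    rewrite (n_opp _ _ _ HP0 HN0) in Hx by auto. lra. }
  assert (Cl3 : c = hi).
  { destruct (Rle_lt_or_eq_dec _ _ Hcb) as [Hch|]; auto. exfalso.
    destruct (Hcont c ltac:(lra) 1 ltac:(lra)) as [d [Hd Hd']].
    set (eta0 := Rmin 1 ((b - a0) / (2 * exp 1 * LL))).
    assert (He0 : 0 < eta0).
    { apply Rmin_pos. lra. apply Rdiv_lt_0_compat. lra. pose proof (exp_pos 1). nra. }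
    set (eta := Rmin eta0 (Rmin (d / 2) (hi - c))).
    assert (He : 0 < eta) by (apply Rmin_pos; [exact He0 | apply Rmin_pos; lra]).
    assert (He1 : eta <= eta0) by apply Rmin_l.
    assert (He2 : eta <= d / 2) by (eapply Rle_trans; [apply Rmin_r|apply Rmin_l]).
    assert (He3 : eta <= hi - c) by (eapply Rle_trans; [apply Rmin_r|apply Rmin_r]).
    assert (He4 : eta0 <= 1) by apply Rmin_l.
    assert (He5 : eta0 <= (b - a0) / (2 * exp 1 * LL)) by apply Rmin_r.
    assert (Hloc : forall r, c <= r <= c + eta -> w r = vzero).
    { apply (local w c eta 1).
      - lra.
      - assert (0 < exp 1) by apply exp_pos.
        assert (Hm : exp 1 * LL * eta <= exp 1 * LL * ((b - a0) / (2 * exp 1 * LL))).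
        { apply Rmult_le_compat_l. nra. lra. }
        replace (exp 1 * LL * ((b - a0) / (2 * exp 1 * LL))) with ((b - a0) / 2) in Hm by (field; lra). lra.
      - intros r Hr. apply HBw; lra.
      - intros r Hr eps Heps. destruct (Hdw r ltac:(lra) eps Heps) as [d1 [Hd1 Hd1']].
        exists d1; split; auto. intros h Hh0 Hh Hrh. apply Hd1'; auto; lra.
      - intros r Hr. replace r with (c + (r - c)) by ring.
        replace (w (c + (r - c))) with (vsub (w (c + (r - c))) (w c)) by (rewrite Cl2; vring (w (c + (r - c)) :: nil)).
        left. apply Hd'. rewrite Rabs_pos_eq; lra. lra.
      - auto. }
    assert (E (c + eta)).
    { split. lra. intros y Hy. destruct (Rlt_le_dec y c). apply Cl1; lra. apply Hloc; lra. }
    assert (c + eta <= c) by (apply Hc1; auto). lra. }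
  subst c. auto.
Qed.

End Core.

Ltac memb HP := repeat first [assumption | apply (P0 _ _ HP) | apply (Psub _ _ HP) | apply (Pscal _ _ HP)
  | apply (Popp _ _ HP) | apply (Padd _ _ HP)].

Theorem proposition2 (X : RVS) (al : R) (ah : option R)
  (B : R -> X -> Prop) (nrm : R -> X -> R) (C D : R -> X -> Prop)
  (A Z : X -> X) (S : R -> R -> X -> X) (nu omega : R) (M N : R -> R) :
  Assum_A1 al ah B nrm ->
  Assum_A2 al ah B nrm C D A S nu omega ->
  Assum_A3 al ah B nrm Z M N ->
  forall (s astar a_s : R) (us : X) (tau t : R) (u : R -> X) (a_tau : R) (v : R -> X),
  0 <= s -> inI al ah astar -> al < a_s -> a_s < astar -> B a_s us ->
  s < tau -> tau < t -> tau < s + Tlen nu M a_s astar ->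
  (* u = U(s, .) us *)
  is_solution B nrm A Z astar s (Tlen nu M a_s astar) us u ->
  (* a_tau = alpha(tau, s, a_s) *)
  is_alpha_inf B (u tau) a_s astar a_tau ->
  t < Rmin (tau + Tlen nu M a_tau astar) (s + Tlen nu M a_s astar) ->
  (* v = U(tau, .) (U(s, tau) us) *)
  is_solution B nrm A Z astar tau (Tlen nu M a_tau astar) (u tau) v ->
  u t = v t.
Proof.
  intros HA1 HA2 HA3 s astar a_s us tau t u a_tau v Hs HI Has1 Has2 Hus Hst Htt Htau Hu Halpha Hmin Hv.
  set (Ts := Tlen nu M a_s astar) in *.
  set (Tt := Tlen nu M a_tau astar) in *.
  assert (Ht1 : t < tau + Tt) by (apply Rlt_le_trans with (1 := Hmin); apply Rmin_l).
  assert (Ht2 : t < s + Ts) by (apply Rlt_le_trans with (1 := Hmin); apply Rmin_r).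
  destruct (BP X al ah B nrm HA1 astar HI) as [HP HN].
  assert (Hbex : exists b, inI al ah b /\ astar < b).
  { destruct HI as [Hl Hh]. destruct ah as [hb|].
    - exists ((astar + hb) / 2). split; [split|]; lra.
    - exists (astar + 1). split; [split|]; auto; lra. }
  destruct Hbex as [b [Hb Hab]].
  destruct Hu as [Hu0 Hu]. destruct Hv as [Hv0 Hv].
  set (w := fun r => vsub (u r) (v r)).
  assert (HuB : forall r, tau <= r <= t -> B astar (u r) /\ B astar (A (u r)) /\ B astar (Z (u r))).
  { intros r Hr. destruct (Hu r ltac:(lra)) as [? [? [? _]]]. auto. }
  assert (HvB : forall r, tau <= r <= t -> B astar (v r) /\ B astar (A (v r)) /\ B astar (Z (v r))).
  { intros r Hr. destruct (Hv r ltac:(lra)) as [? [? [? _]]]. auto. }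
  assert (HAl := Alin X al ah B nrm C D A S nu omega HA2).
  assert (HZl := Zlin X al ah B nrm Z M N HA3).
  assert (HwB : forall r, tau <= r <= t -> B astar (w r) /\ B astar (A (w r)) /\ B astar (Z (w r))).
  { intros r Hr. destruct (HuB r Hr) as [? [? ?]]. destruct (HvB r Hr) as [? [? ?]].
    unfold w. rewrite (lin_sub X al ah B nrm HA1 astar HI A HAl) by auto.
    rewrite (lin_sub X al ah B nrm HA1 astar HI Z HZl) by auto.
    split; [|split]; apply (Psub _ _ HP); auto. }
  assert (Hw : w t = vzero).
  { apply (global X al ah B nrm C D A Z S nu omega M N HA1 HA2 HA3 astar b HI Hb Hab w tau t); auto; try lra.
    - intros r Hr eps Heps.
      destruct (Hu r ltac:(lra)) as [Bu [BAu [BZu Hdu]]].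
      destruct (Hv r ltac:(lra)) as [Bv [BAv [BZv Hdv]]].
      destruct (Hdu (eps / 2) ltac:(lra)) as [d1 [Hd1 Hd1']].
      destruct (Hdv (eps / 2) ltac:(lra)) as [d2 [Hd2 Hd2']].
      exists (Rmin d1 d2). split. apply Rmin_pos; auto.
      intros h Hh0 Hh Hrh.
      assert (h1 : Rabs h < d1) by (apply Rlt_le_trans with (1 := Hh); apply Rmin_l).
      assert (h2 : Rabs h < d2) by (apply Rlt_le_trans with (1 := Hh); apply Rmin_r).
      assert (E1 := Hd1' h Hh0 h1 ltac:(lra)).
      assert (E2 := Hd2' h Hh0 h2 ltac:(lra)).
      destruct (Hu (r + h) ltac:(lra)) as [Buh _].
      destruct (Hv (r + h) ltac:(lra)) as [Bvh _].
      set (Du := vsub (vscal (/ h) (vsub (u (r + h)) (u r))) (vadd (A (u r)) (Z (u r)))) in *.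
      set (Dv := vsub (vscal (/ h) (vsub (v (r + h)) (v r))) (vadd (A (v r)) (Z (v r)))) in *.
      assert (EQ : Dq X A Z w r h = vadd Du (vopp Dv)).
      { unfold Dq, w. rewrite (lin_sub X al ah B nrm HA1 astar HI A HAl) by auto.
        rewrite (lin_sub X al ah B nrm HA1 astar HI Z HZl) by auto.
        unfold Du, Dv.
        vring (u (r + h) :: u r :: v (r + h) :: v r :: A (u r) :: A (v r) :: Z (u r) :: Z (v r) :: nil). }
      rewrite EQ.
      assert (BDu : B astar Du) by (unfold Du; memb HP).
      assert (BDv : B astar Dv) by (unfold Dv; memb HP).
      eapply Rle_lt_trans. apply (n_tri _ _ _ HP HN); auto. apply (Popp _ _ HP); auto.
      rewrite (n_opp _ _ _ HP HN) by auto. lra.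
    - unfold w. rewrite Hv0. vring (u tau :: nil). }
  unfold w in Hw.
  replace (u t) with (vadd (vsub (u t) (v t)) (v t)) by vring (u t :: v t :: nil).
  rewrite Hw. vring (v t :: nil).
Qed.
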